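(* Let $I$ be a compact metric space, $\mu$ a non-negative finite Borel measure on $I$, $N\ge2$, $N'\le N$ natural numbers, and $s$ a surplus function satisfying Assumptions (A1) and (A2). Then the function $\hat s$ on $I^{N!}/\sim_{N!}$ is upper semi-continuous, and there is a lower semi-continuous function $\hat a\in L^1(I,\mu)$ such that $\hat s([i_1,\dots,i_{N!}])\le\sum_{k=1}^{N!}\hat a(i_k)$ for all $i_1,\dots,i_{N!}\in I$.
   Context: For $n\in\mathbb{N}$, $I^n/\sim_n$ is the quotient of $I^n$ by permutation of coordinates (quotient topology), the class of $(i_1,\dots,i_n)$ written $[i_1,\dots,i_n]$; $\mathcal{G}_n=I^n/\sim_n$ is the set of $n$-person groups and $\mathcal{G}=\bigcup_{n=N'}^N\mathcal{G}_n$. A surplus function is $s:\mathcal{G}\to[0,\infty)$, $s_n=s|_{\mathcal{G}_n}$. (A1): each $s_n$, $N'\le n\le N$, is continuous on $\mathcal{G}_n$. (A2): for each $N'\le n\le N$ there is a real-valued lower semi-continuous $a_n$ on $I$ with $s_n([i_1,\dots,i_n])\le\sum_{k=1}^na_n(i_k)$ for all $i_1,\dots,i_n$. For $N'\le n\le N$, $K_n\subset I^{N!}/\sim_{N!}$ is the set of classes $[i_1,\dots,i_{N!}]$ such that for every $i\in I$, $|\{k:i_k=i\}|$ is divisible by $N!/n$; $P_n:K_n\to\mathcal{G}_n$ sends $[\underbrace{j_1,\dots,j_1}_{N!/n},\dots,\underbrace{j_n,\dots,j_n}_{N!/n}]$ to $[j_1,\dots,j_n]$. Define $\hat s_n=s_n\circ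 P_n$ on $K_n$ and $\hat s_n=0$ off $K_n$, and $\hat s=\max_{N'\le n\le N}\frac{N}{n}\hat s_n$ on $I^{N!}/\sim_{N!}$. *)

(* Defs.v *)
From HB Require Import structures.
From mathcomp Require Import all_boot all_order all_algebra all_fingroup.
From mathcomp Require Import all_classical all_reals all_analysis.
Unset Printing Implicit Defensive.
Import Order.TTheory GRing.Theory Num.Theory numFieldNormedType.Exports.
Local Open Scope ring_scope.
Local Open Scope classical_set_scope.

Definition upper_semicont {R : realType} {T : topologicalType} (f : T -> R) :=
  forall t : R, open [set x | f x < t].
Definition lower_semicont {R : realType} {T : topologicalType} (f : T -> R) :=
  forall t : R, open [set x | t < f x].

Notation borel_type T := (g_sigma_algebraType (@open T)).

(* An element of I^m / ~_m is represented by a tuple x : 'I_m -> I; the class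
   of x is determined by the multiplicity function of x. *)
Definition mult {I : choiceType} {m : nat} (x : 'I_m -> I) (i : I) : nat :=
  #|[pred k | x k == i]|.

Definition inK {I : choiceType} (N n : nat) (x : 'I_(N`!) -> I) : Prop :=
  forall i : I, ((N`! %/ n) %| mult x i)%N.

(* y represents P_n [x] : [x] = [y_1 (N!/n times), ..., y_n (N!/n times)] *)
Definition isPn {I : choiceType} (N n : nat) (x : 'I_(N`!) -> I) (y : 'I_n -> I)
  : Prop := forall i : I, mult x i = (N`! %/ n * mult y i)%N.

Definition hat_s_n {R : realType} {I : choiceType} (s : forall n, ('I_n -> I) -> R)
  (N n : nat) (x : 'I_(N`!) -> I) : R :=
  if pselect (inK N n x) then
    match pselect (exists y, isPn N n x y) with
    | left h => s n (projT1 (cid h))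
    | right _ => 0
    end
  else 0.

(* \hat s = max_{N' <= n <= N} (N/n) \hat s_n  (all terms are >= 0) *)
Definition hat_s {R : realType} {I : choiceType} (s : forall n, ('I_n -> I) -> R)
  (N N' : nat) (x : 'I_(N`!) -> I) : R :=
  \big[Num.max/0]_(N' <= n < N.+1) ((N%:R / n%:R) * hat_s_n s N n x).

(* Main.v *)
Require Import Defs.
From HB Require Import structures.
From mathcomp Require Import all_boot all_order all_algebra all_fingroup.
From mathcomp Require Import all_classical all_reals all_analysis.
Import Order.TTheory GRing.Theory Num.Theory numFieldNormedType.Exports.

Section Comb.
Context {I : choiceType}.

Lemma count_tuple_mult k (u : 'I_k -> I) x :
  count_mem x [tuple u j | j < k] = mult u x.
Proof.
rewrite /mult -sum1_card -sum1_count /= big_map /= enumT.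
by apply: eq_bigl => j; rewrite inE.
Qed.

Lemma perm_of_mult k (u v : 'I_k -> I) :
  (forall i, mult u i = mult v i) -> exists p : 'S_k, forall j, u j = v (p j).
Proof.
move=> H.
have : perm_eq [tuple u j | j < k] [tuple v j | j < k].
  by apply/allP => x _ /=; rewrite !count_tuple_mult H.
case/tuple_permP => p Hp; exists p => j.
have := congr1 (fun s => nth (u j) s j) Hp.
by rewrite -!tnth_nth !tnth_mktuple.
Qed.

Lemma sum_mod (f : nat -> nat) d n :
  \sum_(k < d * n) f (k %% n) = d * \sum_(k < n) f k.
Proof.
elim: d => [|d IH]; first by rewrite !mul0n big_ord0.
rewrite mulSn addnC -(big_mkord xpredT (fun k => f (k %% n))).
rewrite (@big_cat_nat _ _ _ (d * n)) ?leq_addr //=.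
rewrite big_mkord IH.
have -> : \sum_(d * n <= i < d * n + n) f (i %% n) = \sum_(i < n) f i.
  rewrite -{1}[d * n]add0n big_addn addKn big_mkord.
  by apply: eq_bigr => i _; rewrite addnC modnMDl modn_small.
by rewrite mulSn addnC.
Qed.

Definition modw {n} (hn : (0 < n)%N) m (y : 'I_n -> I) : 'I_m -> I :=
  fun k => y (Ordinal (ltn_pmod k hn)).

Lemma mult_sum k (u : 'I_k -> I) i :
  mult u i = \sum_(j < k) (u j == i).
Proof. by rewrite /mult -sum1_card big_mkcond /=; apply: eq_bigr => j _; rewrite inE; case: (_ == _). Qed.

Lemma mult_modw n (hn : (0 < n)%N) d (y : 'I_n -> I) i :
  mult (modw hn (d * n) y) i = d * mult y i.
Proof.
pose f j := oapp (fun o : 'I_n => (y o == i) : nat) 0 (insub j).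
rewrite !mult_sum.
transitivity (\sum_(k < d * n) f (k %% n)).
  apply: eq_bigr => k _; rewrite /f; case: insubP => [u0 _ Ho|/negP []]; last exact: ltn_pmod.
  by rewrite /modw /=; do 3 f_equal; apply: val_inj.
rewrite sum_mod; congr (_ * _); apply: eq_bigr => k _.
by rewrite /f valK.
Qed.

Lemma mult_modw' n (hn : (0 < n)%N) m d (e : m = d * n) (y : 'I_n -> I) i :
  mult (modw hn m y) i = d * mult y i.
Proof. by subst m; exact: mult_modw. Qed.

Lemma mult_comp_perm k (u : 'I_k -> I) (p : 'S_k) i : mult (u \o p) i = mult u i.
Proof. by rewrite !mult_sum [RHS](reindex_inj (@perm_inj _ p)). Qed.

Definition yof {n m} (hnm : n <= m) (p : 'S_m) (x : 'I_m -> I) : 'I_n -> I :=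
  fun j => x ((p^-1)%g (widen_ord hnm j)).

Definition inC {n m} (hn : 0 < n) (hnm : n <= m) (p : 'S_m) (x : 'I_m -> I) :=
  forall k, x k = modw hn m (yof hnm p x) (p k).

Lemma mult_inC n m (hn : 0 < n) (hnm : n <= m) d (e : m = d * n) p x :
  inC hn hnm p x -> forall i, mult x i = d * mult (yof hnm p x) i.
Proof.
move=> H i.
have -> : mult x i = mult (modw hn m (yof hnm p x) \o p) i.
  by rewrite /mult; apply: eq_card => k; rewrite !inE /= {1}H.
by rewrite mult_comp_perm (@mult_modw' _ hn _ _ e).
Qed.

Lemma inC_of_mult n m (hn : 0 < n) (hnm : n <= m) d (e : m = d * n) x y :
  (forall i, mult x i = d * mult y i) ->
  exists p, inC hn hnm p x /\ yof hnm p x = y.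
Proof.
move=> H.
have [p Hp] : exists p : 'S_m, forall j, x j = modw hn m y (p j).
  by apply: perm_of_mult => i; rewrite H (@mult_modw' _ hn _ _ e).
have Ey : yof hnm p x = y.
  apply: funext => j; rewrite /yof Hp permKV /modw; congr y; apply: val_inj => /=.
  by rewrite modn_small.
by exists p; split => // k; rewrite Ey; exact: Hp.
Qed.

Lemma mult_uniq n d (hd : 0 < d) m (x : 'I_m -> I) (y y' : 'I_n -> I) :
  (forall i, mult x i = d * mult y i) -> (forall i, mult x i = d * mult y' i) ->
  exists p : 'S_n, forall j, y' j = y (p j).
Proof.
move=> H H'; apply: perm_of_mult => i.
by apply/eqP; rewrite -(eqn_pmul2l hd) -H -H'.
Qed.

End Comb.

Local Open Scope ring_scope.
Local Open Scope classical_set_scope.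

Lemma bigmax_ge (R : realType) (r : seq nat) (F : nat -> R) i :
  i \in r -> F i <= \big[Num.max/0]_(j <- r) F j.
Proof.
elim: r => // a r IH; rewrite inE big_cons le_max => /orP[/eqP->|/IH->];
  by rewrite ?lexx ?orbT.
Qed.

Lemma bigmax_ge0 (R : realType) (r : seq nat) (F : nat -> R) :
  0 <= \big[Num.max/0]_(j <- r) F j.
Proof.
by elim: r => [|a r IH]; rewrite ?big_nil ?big_cons ?le_max ?IH ?orbT.
Qed.

Section HatS.
Variables (R : realType) (I : choiceType) (s : forall n, ('I_n -> I) -> R) (N n : nat).
Hypothesis hsym : forall (y : 'I_n -> I) (p : {perm 'I_n}), s n (y \o p) = s n y.
Hypothesis hd : (0 < N`! %/ n)%N.

Lemma hat_s_n_eq x y : isPn N n x y -> hat_s_n s N n x = s n y.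
Proof.
move=> Hy; rewrite /hat_s_n.
case: pselect => [hK|hK]; last first.
  by exfalso; apply: hK => i; rewrite Hy; exact: dvdn_mulr.
case: pselect => [h|h]; last by exfalso; apply: h; exists y.
case: (cid h) => y' Hy' /=.
have [p Hp] := @mult_uniq _ n _ hd _ _ _ _ Hy' Hy.
have -> : y = y' \o p by apply: funext.
by rewrite hsym.
Qed.

Lemma hat_s_n_0 x : ~ (exists y, isPn N n x y) -> hat_s_n s N n x = 0.
Proof.
move=> h; rewrite /hat_s_n; case: pselect => [hK|//].
by case: pselect => [h'|//]; exfalso.
Qed.

Lemma hat_s_n_cases x :
  (exists y, hat_s_n s N n x = s n y) \/ hat_s_n s N n x = 0.
Proof.
case: (pselect (exists y, isPn N n x y)) => [[y Hy]|h].
  by left; exists y; exact: hat_s_n_eq.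
by right; exact: hat_s_n_0.
Qed.
End HatS.

Lemma ptws_cvg_of {U : choiceType} {V : topologicalType} (F : set_system {ptws U -> V}) {FF : Filter F} (f : {ptws U -> V}) :
  (forall t, (fun g : {ptws U -> V} => g t) @ F --> f t) -> F --> f.
Proof.
move=> H; apply/cvg_sup => i.
move=> A /= [_ [[B Bop <-] Bfs sBfA]].
have := H i B (open_nbhs_nbhs (conj Bop Bfs)).
move=> HB; exact: (@filterS _ _ FF _ _ (fun g Bg => sBfA g Bg) HB).
Qed.

Lemma usc_g (R : realType) (I : topologicalType) (hI : hausdorff_space I)
  (s : forall n, ('I_n -> I) -> R) N n (hn : (0 < n)%N) (hnN : (n <= N)%N)
  (hsym : forall (y : 'I_n -> I) (p : {perm 'I_n}), s n (y \o p) = s n y)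
  (hge0 : forall y, 0 <= s n y)
  (hcont : continuous (fun y : {ptws 'I_n -> I} => s n y))
  (x : {ptws 'I_(N`!) -> I}) t :
  hat_s_n s N n x < t -> \forall z \near x, hat_s_n s N n z < t.
Proof.
move=> hx.
have hdv : (n %| N`!)%N by apply: dvdn_fact; rewrite hn hnN.
have hnm : (n <= N`!)%N by apply: dvdn_leq; rewrite ?fact_gt0.
have e : N`! = (N`! %/ n * n)%N by rewrite divnK.
have hd : (0 < N`! %/ n)%N by rewrite divn_gt0.
have t0 : 0 < t.
  apply: le_lt_trans hx.
  by case: (@hat_s_n_cases _ _ s N n hsym hd x) => [[y ->]|->].
have : \forall z \near x, forall p : 'S_(N`!),
    inC hn hnm p z -> s n (yof hnm p z) < t.
  apply: (@filter_forall _ _ (fun (p : 'S_(N`!)) (z : {ptws 'I_(N`!) -> I}) => inC hn hnm p z -> s n (yof hnm p z) < t) (nbhs x) _) => p.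
  case: (pselect (inC hn hnm p x)) => Hx.
    have gx : hat_s_n s N n x = s n (yof hnm p x).
      exact: (@hat_s_n_eq _ _ s N n hsym hd _ _ (@mult_inC _ _ _ hn hnm _ e _ _ Hx)).
    have cy : {for x, continuous (fun z : {ptws 'I_(N`!) -> I} => s n (yof hnm p z))}.
      apply: (@continuous_comp _ _ _ (fun z : {ptws 'I_(N`!) -> I} => (yof hnm p z : {ptws 'I_n -> I}))); last exact: hcont.
      apply: (@ptws_cvg_of _ _ _ (fmap_filter _ (nbhs_filter x))) => j.
      exact: (@proj_continuous _ (fun=> I) ((p^-1)%g (widen_ord hnm j)) x).
    have := cvgr_lt _ cy; rewrite -gx => /(_ _ t hx).
    by apply: filterS => z hz _.
  have [k Hk] : exists k, x k <> modw hn (N`!) (yof hnm p x) (p k).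
    by apply/existsNP => hk; apply: Hx.
  set k' := ((p^-1)%g (widen_ord hnm (Ordinal (ltn_pmod (p k) hn)))).
  have hnc : ~ cluster (nbhs (x k)) (x k') by move/hI.
  have [A [B [nA [nB dAB]]]] : exists A B, nbhs (x k) A /\ nbhs (x k') B /\ ~ (A `&` B !=set0).
    case: (pselect (exists A B, nbhs (x k) A /\ nbhs (x k') B /\ ~ (A `&` B !=set0))) => // h.
    exfalso; apply: hnc => A B hA hB.
    case: (pselect (A `&` B !=set0)) => // hAB.
    by exfalso; apply: h; exists A, B.
  have HA : nbhs x [set z : {ptws 'I_(N`!) -> I} | A (z k)] := @proj_continuous _ (fun=> I) k x A nA.
  have HB : nbhs x [set z : {ptws 'I_(N`!) -> I} | B (z k')] := @proj_continuous _ (fun=> I) k' x B nB.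
  apply: (@filterS2 _ _ (nbhs_filter x) _ _ _ _ HA HB).
  move=> z /= hzA hzB hC; exfalso; apply: dAB; exists (z k); split => //.
  by rewrite (hC k).
move=> Hall; apply: (@filterS _ _ (nbhs_filter x) _ _ _ Hall) => z Hz.
case: (pselect (exists y, isPn N n z y)) => [[y Hy]|h].
  have [p [Cp Ep]] := @inC_of_mult _ _ _ hn hnm _ e _ _ Hy.
  by rewrite (@hat_s_n_eq _ _ s N n hsym hd _ _ Hy) -Ep; exact: Hz.
by rewrite (@hat_s_n_0 _ _ s N n).
Qed.

Theorem lemma1 (R : realType) (I : pseudoPMetricType R)
  (I_compact : compact [set: I]) (I_hausdorff : hausdorff_space I)
  (mu : {measure set (borel_type I) -> \bar R})
  (mu_fin : (mu [set: borel_type I] < +oo)%E)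
  (N N' : nat) (HN : (2 <= N)%N) (HN'1 : (1 <= N')%N) (HN'N : (N' <= N)%N)
  (s : forall n : nat, ('I_n -> I) -> R)
  (s_sym : forall n : nat, (N' <= n <= N)%N ->
     forall (y : 'I_n -> I) (sigma : {perm 'I_n}), s n (y \o sigma) = s n y)
  (s_ge0 : forall n : nat, (N' <= n <= N)%N -> forall y : 'I_n -> I, 0 <= s n y)
  (A1 : forall n : nat, (N' <= n <= N)%N ->
     continuous (fun y : {ptws 'I_n -> I} => s n y))
  (A2 : forall n : nat, (N' <= n <= N)%N ->
     exists a : I -> R, lower_semicont a /\
       forall y : 'I_n -> I, s n y <= \sum_(k < n) a (y k)) :
  upper_semicont (fun x : {ptws 'I_(N`!) -> I} => hat_s s N N' x) /\
  exists a : I -> R,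
    [/\ lower_semicont a,
        mu.-integrable [set: borel_type I] (fun i : borel_type I => (a i)%:E)
      & forall x : 'I_(N`!) -> I, hat_s s N N' x <= \sum_(k < N`!) a (x k)].
Proof.
have hd : forall n, (N' <= n <= N)%N -> (0 < N`! %/ n)%N.
  move=> n /andP[h1 h2]; have hn0 : (0 < n)%N := leq_trans HN'1 h1.
  rewrite divn_gt0 //; apply: dvdn_leq; first exact: fact_gt0.
  by apply: dvdn_fact; rewrite hn0 h2.
have hcases : forall n, (N' <= n <= N)%N -> forall x,
    (exists y, hat_s_n s N n x = s n y) \/ hat_s_n s N n x = 0.
  by move=> n hn x; exact: (@hat_s_n_cases _ _ s N n (s_sym n hn) (hd n hn) x).
split.
  move=> t; rewrite openE => x hx.
  have hall : forall n, (N' <= n <= N)%N ->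
      (N%:R / n%:R) * hat_s_n s N n x < t.
    move=> n hn; apply: le_lt_trans hx; rewrite /hat_s.
    by apply: bigmax_ge; rewrite mem_index_iota ltnS.
  have t0 : 0 < t by apply: le_lt_trans hx; exact: bigmax_ge0.
  have : \forall z \near x, forall i : 'I_N.+1, (N' <= i)%N ->
      (N%:R / i%:R) * hat_s_n s N i z < t.
    apply: (@filter_forall _ _ (fun (i : 'I_N.+1) (z : {ptws 'I_(N`!) -> I}) => (N' <= i)%N ->
      (N%:R / i%:R) * hat_s_n s N i z < t) (nbhs x) _) => i.
    have [hi|hi] := leqP N' i; last by apply: nearW.
    have hiN : (i <= N)%N by rewrite -ltnS ltn_ord.
    have hin : (N' <= i <= N)%N by rewrite hi hiN.
    have hi0 : (0 < i)%N by apply: leq_trans HN'1 hi.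
    have c0 : 0 < N%:R / i%:R :> R.
      by apply: divr_gt0; rewrite ltr0n //; exact: (@leq_trans 2).
    have := hall i hin; rewrite mulrC -ltr_pdivlMr // => hx'.
    have := @usc_g R I I_hausdorff s N i hi0 hiN (s_sym i hin) (s_ge0 i hin) (A1 i hin) x _ hx'.
    move=> H; apply: (@filterS _ _ (nbhs_filter x) _ _ _ H) => z hz _.
    by rewrite mulrC -ltr_pdivlMr.
  move=> H; apply: (@filterS _ _ (nbhs_filter x) _ _ _ H) => z Hz.
  rewrite /hat_s /= big_seq.
  apply: (big_ind (fun v => v < t)) => //.
    by move=> a b ha hb; rewrite gt_max ha hb.
  move=> i; rewrite mem_index_iota => /andP[h1 h2]; exact: (Hz (Ordinal h2) h1).
have hbnd : forall n, (N' <= n <= N)%N -> exists M, forall y, s n y <= M.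
  move=> n hn.
  have K : compact [set: {ptws 'I_n -> I}].
    have := @tychonoff 'I_n (fun=> I) (fun=> setT) (fun=> I_compact).
    by rewrite (_ : [set f | _] = setT) //; apply/seteqP; split.
  have := compact_bounded (continuous_compact (continuous_subspaceT (A1 n hn)) K).
  move=> [M [Mreal]]/(_ (`|M| + 1)).
  rewrite (le_lt_trans (ler_norm _)) ?ltrDl// => /(_ erefl) aM.
  exists (`|M| + 1) => y; rewrite (le_trans (ler_norm _))// aM //.
have [B [B0 HB]] : exists B, 0 <= B /\
    forall n, (N' <= n <= N)%N -> forall y, s n y <= B.
  suff : forall k, exists B, 0 <= B /\
      forall n, (n < k)%N -> (N' <= n <= N)%N -> forall y, s n y <= B.
    case/(_ N.+1) => B [B0 HB]; exists B; split => // n hn; apply: HB => //.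
    by case/andP: hn => _ h; rewrite ltnS.
  elim=> [|k [B [B0 HB]]]; first by exists 0.
  case: (pselect (N' <= k <= N)%N) => hk.
    have [M HM] := hbnd k hk.
    exists (Num.max B M); split; first by rewrite le_max B0.
    move=> n; rewrite ltnS leq_eqVlt => /orP[/eqP->|hn] hn' y.
      by rewrite le_max HM orbT.
    by rewrite le_max (HB n hn hn' y).
  exists B; split => // n; rewrite ltnS leq_eqVlt => /orP [/eqP ->|hn] hn';
    [by exfalso | exact: HB].
have fact0 : (N`!)%:R != 0 :> R by rewrite pnatr_eq0 -lt0n fact_gt0.
exists (fun _ => N%:R * B / (N`!)%:R); split.
- move=> t /=.
  have [h|h] := ltP t (N%:R * B / (N`!)%:R).
    rewrite (_ : [set _ | _] = setT); first exact: openT.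
    by apply/seteqP; split => // z _ /=.
  rewrite (_ : [set _ | _] = set0); first exact: open0.
  by apply/seteqP; split => // z /=; rewrite ltNge h.
- apply/integrableP; split; first exact: measurable_cst.
  rewrite integral_cst //= lte_mul_pinfty //.
- move=> x.
  have -> : \sum_(k < N`!) (N%:R * B / (N`!)%:R) = N%:R * B.
    by rewrite sumr_const card_ord -[X in X = _]mulr_natr divfK.
  rewrite /hat_s big_seq.
  apply: (big_ind (fun v => v <= N%:R * B)) => //.
  + by rewrite mulr_ge0.
  + by move=> a b ha hb; rewrite ge_max ha hb.
  move=> i; rewrite mem_index_iota => /andP[h1 h2].
  have hin : (N' <= i <= N)%N by rewrite h1 -ltnS h2.
  have hi0 : (0 < i)%N by apply: leq_trans HN'1 h1.
  have [[y ->]|->] := hcases i hin x; last by rewrite mulr0 mulr_ge0.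
  apply: ler_pM; rewrite ?divr_ge0 ?s_ge0 ?HB //.
  by rewrite ler_pdivrMr ?ltr0n // ler_peMr // ler1n.
Qed.
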